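(* Let $A$ be a non-zero $n\times m$ matrix with entries in $[0,1]$, let $v$ be the value of the zero-sum game $A$, and let $x^*\in\Delta_n$ be any minimax strategy of the row player (i.e. $f(x^* )=v$). Suppose the row player plays the multiplicative weight update (MWU) algorithm with a non-increasing step size sequence $(\mu_t)$ for which there exists $t'\in\mathbb{N}$ with $\mu_{t'}\le 1$, and the column player plays the LRCA algorithm. Then $$RE(x^*\|x_{2k-1})-RE(x^*\|x_{2k+1})\ \ge\ \tfrac12\,\mu_{2k}\,\alpha_{2k}\,\big(f(x_{2k-1})-v\big)\qquad\text{for all }k\in\mathbb{N}\text{ with }2k\ge t',$$ where $\alpha_{2k}$ is the mixing coefficient used by LRCA at round $2k$.
   Context: Repeated two-player zero-sum game: $A$ is an $n\times m$ non-zero matrix with entries in $[0,1]$; $\Delta_n,\Delta_m$ are the probability simplices. At round $t=1,2,\dots$ the row player plays $x_t\in\Delta_n$, the column player plays $y_t\in\Delta_m$; the row player wants to minimize $x_t^\top Ay_t$, the column player to maximize it. $v=\max_{y}\min_x x^\top Ay=\min_x\max_y x^\top Ay$ is the value of the game and $f(x):=\max_{y\in\Delta_m}x^\top Ay$. A minimax strategy of the row player is $x$ with $f(x)=v$; a minimax strategy of the column player is $y$ with $\min_{x\in\Delta_n}x^\top Ay=v$. Relative entropy: $RE(X_1\|X_2)=\sum_{i=1}^n X_1(i)\log\frac{X_1(i)}{X_2(i)}$. MWU for the row player: starting from an initial $x_1$ with all entries positive, $x_{t+1}(i)=x_t(i)e^{-\mu_t e_i^\top Ay_t}/Z_t$ with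 $Z_t=\sum_{j}x_t(j)e^{-\mu_t e_j^\top Ay_t}$, $\mu_t\ge 0$, $e_i$ the $i$-th unit vector. LRCA algorithm for the column player (who knows $A$, and fixes one minimax strategy $y^*$ of the column player): at odd rounds $t$, $y_t=y^*$; at even rounds $t$, let $e_t\in\arg\max_{e\in\{e_1,\dots,e_m\}}x_{t-1}^\top Ae$ (unit vectors in $\mathbb{R}^m$), $\alpha_t=\frac{f(x_{t-1})-v}{\max(n/4,\,2)}$, and $y_t=(1-\alpha_t)y^*+\alpha_t e_t$. *)

(* Defs.v *)
From HB Require Import structures.
From mathcomp Require Import all_boot all_order all_algebra.
From mathcomp Require Import all_classical all_reals all_analysis.
Set Implicit Arguments. Unset Strict Implicit. Unset Printing Implicit Defensive.
Import Order.TTheory GRing.Theory Num.Theory.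
Local Open Scope classical_set_scope.
Local Open Scope ring_scope.

Section GameDefs.
Context {R : realType}.

Definition simplex (k : nat) : set ('I_k -> R) :=
  [set x | (forall i, 0 <= x i) /\ \sum_(i < k) x i = 1].
Arguments simplex : clear implicits.

Definition payoff (n m : nat) (A : 'M[R]_(n, m)) (x : 'I_n -> R) (y : 'I_m -> R) : R :=
  \sum_(i < n) \sum_(j < m) x i * A i j * y j.

Definition fmax (n m : nat) (A : 'M[R]_(n, m)) (x : 'I_n -> R) : R :=
  sup [set payoff A x y | y in simplex m].

Definition gmin (n m : nat) (A : 'M[R]_(n, m)) (y : 'I_m -> R) : R :=
  inf [set payoff A x y | x in simplex n].

Definition game_value (n m : nat) (A : 'M[R]_(n, m)) : R :=
  inf [set fmax A x | x in simplex n].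

Definition row_minimax (n m : nat) (A : 'M[R]_(n, m)) (x : 'I_n -> R) : Prop :=
  simplex n x /\ fmax A x = game_value A.

Definition col_minimax (n m : nat) (A : 'M[R]_(n, m)) (y : 'I_m -> R) : Prop :=
  simplex m y /\ gmin A y = game_value A.

(* relative entropy; since ln 0 = 0 in mathcomp-analysis, terms with
   X1 i = 0 contribute 0 (convention 0 log 0 = 0) *)
Definition RE (n : nat) (X1 X2 : 'I_n -> R) : R :=
  \sum_(i < n) X1 i * ln (X1 i / X2 i).

Definition unitv (m : nat) (j : 'I_m) : 'I_m -> R :=
  fun j' => if j' == j then 1 else 0.

Definition lrca_alpha (n m : nat) (A : 'M[R]_(n, m)) (xprev : 'I_n -> R) : R :=
  (fmax A xprev - game_value A) / Num.max (n%:R / 4) 2.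

Definition MWU (n m : nat) (A : 'M[R]_(n, m)) (mu : nat -> R)
    (x : nat -> 'I_n -> R) (y : nat -> 'I_m -> R) : Prop :=
  simplex n (x 1%N) /\ (forall i, 0 < x 1%N i) /\
  forall t, (1 <= t)%N -> forall i,
    x t.+1 i = x t i * expR (- mu t * (\sum_(j < m) A i j * y t j)) /
               (\sum_(i' < n) x t i' * expR (- mu t * (\sum_(j < m) A i' j * y t j))).

Definition LRCA (n m : nat) (A : 'M[R]_(n, m)) (ystar : 'I_m -> R)
    (x : nat -> 'I_n -> R) (y : nat -> 'I_m -> R) : Prop :=
  forall t, (1 <= t)%N ->
    (odd t -> y t = ystar) /\
    (~~ odd t -> exists j : 'I_m,
        (forall j' : 'I_m, payoff A (x t.-1) (unitv j') <= payoff A (x t.-1) (unitv j)) /\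
        y t = (fun j' => (1 - lrca_alpha A (x t.-1)) * ystar j'
                          + lrca_alpha A (x t.-1) * unitv j j')).

End GameDefs.

(* Main.v *)
Require Import Defs.
From HB Require Import structures.
From mathcomp Require Import all_boot all_order all_algebra.
From mathcomp Require Import all_classical all_reals all_analysis.
From mathcomp Require Import ring lra.
Import Order.TTheory GRing.Theory Num.Theory.
Local Open Scope ring_scope.

Local Open Scope classical_set_scope.
Local Open Scope ring_scope.
Section H.
Variable R : realType.

Lemma ln_le_sub1 (u : R) : 0 < u -> ln u <= u - 1.
Proof. move=> u0; have := expR_ge1Dx (ln u); rewrite lnK ?posrE //; lra. Qed.

Lemma expR_inv_bound (w : R) : w < 1 -> expR w <= (1 - w)^-1.
Proof.
move=> w1.
have h := expR_ge1Dx (- w).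
rewrite expRN in h.
have e0 := expR_gt0 w.
rewrite -[expR w]invrK lef_pV2 ?posrE ?invr_gt0 //; lra.
Qed.

Lemma expR_quad (w : R) : -(1/2) <= w <= 1/2 -> expR w <= 1 + w + w ^+ 2.
Proof.
move=> /andP[wl wu].
have [w0|w0] := leP w 0.
  have hw1 : w < 1 by lra.
  apply: le_trans (expR_inv_bound _ hw1) _.
  have p : 0 < 1 - w by lra.
  rewrite invf_ple ?posrE //; last nra.
  have q : 0 < 1 + w + w ^+ 2 by nra.
  rewrite -[X in X <= _]mul1r ler_pdivrMr //; nra.
have -> : w = 4%:R * (w / 4) by field.
rewrite expRM_natl.
set u := w / 4.
have u0 : 0 < u by rewrite /u; lra.
have u1 : u <= 1/8 by rewrite /u; lra.
have hu1 : u < 1 by lra.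
have h := expR_inv_bound _ hu1.
have p : 0 < 1 - u by lra.
apply: le_trans (lerXn2r 4 _ _ h) _; [by rewrite nnegrE expR_ge0| by rewrite nnegrE invr_ge0 ltW|].
rewrite exprVn.
have q : 0 < (1 - u) ^+ 4 by rewrite exprn_gt0.
rewrite -[X in X <= _]mul1r ler_pdivrMr //.
have e : (1 + 4%:R * u + (4%:R * u) ^+ 2) * (1 - u) ^+ 4 - 1 =
  u ^+ 2 * (6%:R - 44%:R * u + 81%:R * u ^+ 2 - 60%:R * u ^+ 3 + 16%:R * u ^+ 4).
  rewrite !exprS expr0; ring.
have hh : 0 <= u ^+ 2 * (6%:R - 44%:R * u + 81%:R * u ^+ 2 - 60%:R * u ^+ 3 + 16%:R * u ^+ 4).
  apply: mulr_ge0; first by rewrite sqr_ge0.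
  have : u ^+ 3 <= u * (1/64) by rewrite exprS; nra.
  nra.
lra.
Qed.
End H.

Lemma sum_unitv {R : realType} {k : nat} (i0 : 'I_k) (F : 'I_k -> R) :
  \sum_(i < k) unitv i0 i * F i = F i0.
Proof.
rewrite (bigD1 i0) //= [X in _ + X]big1 => [|i /negPf ni].
  by rewrite addr0 /unitv eqxx mul1r.
by rewrite /unitv ni mul0r.
Qed.

Lemma sum_unitv1 {R : realType} {k : nat} (i0 : 'I_k) : \sum_(i < k) (unitv i0 i : R) = 1.
Proof. by rewrite -[RHS](sum_unitv i0 (fun _ => 1)); apply: eq_bigr => i _; rewrite mulr1. Qed.


Section G.
Context {R : realType} {n m : nat} {A : 'M[R]_(n, m)}.
Local Notation smp k := (@simplex R k).
Hypothesis hA01 : forall i j, 0 <= A i j <= 1.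

Lemma payoff_rows (x : 'I_n -> R) y :
  payoff A x y = \sum_(i < n) x i * (\sum_(j < m) A i j * y j).
Proof. by apply: eq_bigr => i _; rewrite mulr_sumr; apply: eq_bigr => j _; rewrite mulrA. Qed.

Lemma payoff_cols (x : 'I_n -> R) y :
  payoff A x y = \sum_(j < m) y j * payoff A x (unitv j).
Proof.
rewrite /payoff exchange_big; apply: eq_bigr => j _.
rewrite mulr_sumr; apply: eq_bigr => i _.
rewrite (bigD1 j) //= big1 ?addr0.
  by rewrite /unitv eqxx mulr1 mulrC.
by move=> j' /negPf nj; rewrite /unitv nj mulr0.
Qed.

Lemma payoff_unit_row (i : 'I_n) y :
  payoff A (unitv i) y = \sum_(j < m) A i j * y j.
Proof.
by rewrite payoff_rows sum_unitv.
Qed.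

Lemma unitv_simplex (j : 'I_m) : smp m (unitv j : _ -> R).
Proof.
split; first by move=> j'; rewrite /unitv; case: ifP.
exact: sum_unitv1.
Qed.

Lemma payoff01 {x y} : smp n x -> smp m y -> 0 <= payoff A x y <= 1.
Proof.
move=> [x0 x1] [y0 y1]; rewrite payoff_rows; apply/andP; split.
  apply: sumr_ge0 => i _; apply: mulr_ge0 => //; apply: sumr_ge0 => j _.
  by apply: mulr_ge0 => //; case/andP: (hA01 i j).
rewrite -x1; apply: ler_sum => i _; rewrite -[leRHS]mulr1; apply: ler_wpM2l => //.
rewrite -y1; apply: ler_sum => j _; rewrite -[leRHS]mul1r; apply: ler_wpM2r => //.
by case/andP: (hA01 i j).
Qed.

Lemma fmax_ge {x y} : smp n x -> smp m y -> payoff A x y <= fmax A x.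
Proof.
move=> sx sy; apply: ub_le_sup; last by exists y.
exists 1 => _ [y' sy' <-]; by case/andP: (payoff01 sx sy').
Qed.


Lemma fmax_le x c : (0 < m)%N -> (forall j, payoff A x (unitv j) <= c) -> fmax A x <= c.
Proof.
move=> m0 hc; apply: ge_sup.
  by exists (payoff A x (unitv (Ordinal m0))), (unitv (Ordinal m0)) => //; exact: unitv_simplex.
move=> _ [y [y0 y1] <-]; rewrite payoff_cols.
rewrite -[c]mul1r -y1 big_distrl /=; apply: ler_sum => j _.
by apply: ler_wpM2l.
Qed.

Lemma fmax01 {x} : (0 < m)%N -> smp n x -> 0 <= fmax A x <= 1.
Proof.
move=> m0 sx; have su := unitv_simplex (Ordinal m0).
apply/andP; split.
  by apply: le_trans (fmax_ge sx su); case/andP: (payoff01 sx su).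
apply: fmax_le => // j; by case/andP: (payoff01 sx (unitv_simplex j)).
Qed.

Lemma value_le {x} : (0 < m)%N -> smp n x -> game_value A <= fmax A x.
Proof.
move=> m0 sx; apply: ge_inf; last by exists x.
exists 0 => _ [x' sx' <-]; by case/andP: (fmax01 m0 sx').
Qed.

Lemma value_ge0 {x} : (0 < m)%N -> smp n x -> 0 <= game_value A.
Proof.
move=> m0 sx; apply: lb_le_inf; first by exists (fmax A x), x.
move=> _ [x' sx' <-]; by case/andP: (fmax01 m0 sx').
Qed.

Lemma gmin_le y i : smp m y -> gmin A y <= \sum_(j < m) A i j * y j.
Proof.
move=> sy; rewrite -payoff_unit_row; apply: ge_inf.
  exists 0 => _ [x' sx' <-]; by case/andP: (payoff01 sx' sy).
exists (unitv i) => //; split; first by move=> j'; rewrite /unitv; case: ifP.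
exact: sum_unitv1.
Qed.

End G.

Lemma Zpos {R : realType} {k : nat} (x e : 'I_k -> R) :
  @simplex R k x -> (forall i, 0 < x i) -> (forall i, 0 < e i) -> 0 < \sum_(i < k) x i * e i.
Proof.
move=> [_ s1] xp ep.
case: (pickP (@predT 'I_k)) => [i0 _|h].
  rewrite (bigD1 i0) //=; apply: ltr_pwDl; first exact: mulr_gt0.
  by apply: sumr_ge0 => i _; apply: mulr_ge0; apply: ltW.
by move: s1; rewrite big_pred0 // => /eqP; rewrite eq_sym oner_eq0.
Qed.

Lemma RE_diff {R : realType} {k : nat} (xs x1 x3 g : 'I_k -> R) (W : R) :
  @simplex R k xs -> (forall i, 0 < x1 i) -> 0 < W ->
  (forall i, x3 i = x1 i * expR (g i) / W) ->
  RE xs x1 - RE xs x3 = \sum_(i < k) xs i * g i - ln W.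
Proof.
move=> [xs0 xs1] x1p Wp hx3.
rewrite /RE -sumrB.
have -> : \sum_(i < k) xs i * g i - ln W = \sum_(i < k) (xs i * g i - xs i * ln W).
  by rewrite sumrB -mulr_suml xs1 mul1r.
apply: eq_bigr => i _.
have [z|p] := eqVneq (xs i) 0; first by rewrite z !mul0r subrr.
have xp : 0 < xs i by rewrite lt0r p xs0.
have e3 : ln (x3 i) = ln (x1 i) + g i - ln W.
  rewrite hx3 ln_div ?lnM ?expRK // posrE ?mulr_gt0 ?expR_gt0 //.
have x3p : 0 < x3 i by rewrite hx3 divr_gt0 // mulr_gt0 // expR_gt0.
rewrite !ln_div ?posrE // e3; ring.
Qed.

Lemma mwu_inv {R : realType} {n m : nat} {A : 'M[R]_(n, m)} {mu x y} :
  MWU A mu x y -> forall t, (1 <= t)%N -> @simplex R n (x t) /\ forall i, 0 < x t i.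
Proof.
move=> [s1 [p1 hM]]; elim=> [//|t IH] _.
case: t IH => [_|t IH]; first by split.
have [[s0 s1'] pt] := IH isT.
set Z := \sum_(i' < n) x t.+1 i' * expR (- mu t.+1 * (\sum_(j < m) A i' j * y t.+1 j)).
have Zp : 0 < Z by apply: Zpos => // i; apply: expR_gt0.
have hp : forall i, 0 < x t.+2 i.
  by move=> i; rewrite hM // divr_gt0 // mulr_gt0 // expR_gt0.
split=> //; split; first by move=> i; apply: ltW.
under eq_bigr => i _ do rewrite hM //.
by rewrite -mulr_suml -/Z divff // gt_eqF.
Qed.

Local Close Scope classical_set_scope.

Theorem lemma4 (R : realType) (n m : nat) (A : 'M[R]_(n, m))
  (hA0 : A != 0)
  (hA01 : forall i j, 0 <= A i j <= 1)
  (xstar : 'I_n -> R) (hxstar : row_minimax A xstar)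
  (ystar : 'I_m -> R) (hystar : col_minimax A ystar)
  (mu : nat -> R)
  (hmu0 : forall t, (1 <= t)%N -> 0 <= mu t)
  (hmudec : forall s t, (1 <= s)%N -> (s <= t)%N -> mu t <= mu s)
  (t' : nat) (ht'1 : (1 <= t')%N) (ht' : mu t' <= 1)
  (x : nat -> 'I_n -> R) (y : nat -> 'I_m -> R)
  (hMWU : MWU A mu x y) (hLRCA : LRCA A ystar x y) :
  forall k : nat, (1 <= k)%N -> (t' <= k.*2)%N ->
    RE xstar (x k.*2.-1) - RE xstar (x k.*2.+1)
      >= 1 / 2 * mu k.*2 * lrca_alpha A (x k.*2.-1) * (fmax A (x k.*2.-1) - game_value A).
Proof.
move=> k k1 hk.
have k2p : (1 <= k.*2)%N by rewrite -addnn; apply: leq_trans k1 (leq_addr _ _).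
have ht1 : (k.*2.-1).+1 = k.*2 by rewrite prednK.
have t1p : (1 <= k.*2.-1)%N.
  by rewrite -ltnS ht1 -addnn; exact: (leq_add k1 k1).
have odd1 : odd k.*2.-1.
  by have := odd_double k; rewrite -ht1 /= => /negbFE.
have hy1 : y k.*2.-1 = ystar := (hLRCA _ t1p).1 odd1.
have ev : ~~ odd k.*2 by rewrite odd_double.
have [j0 [hbest hy2]] := (hLRCA _ k2p).2 ev.
have m0 : (0 < m)%N by apply: leq_ltn_trans (leq0n j0) (ltn_ord j0).
set t1 := k.*2.-1 in ht1 t1p odd1 hy1 hbest hy2 *.
set mu1 := mu t1; set mu2 := mu k.*2.
set al := lrca_alpha A (x t1) in hy2 *.
set v := game_value A.
set f := fmax A (x t1).
have [sx1 px1] := mwu_inv hMWU _ t1p.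
have [sx2 px2] := mwu_inv hMWU _ k2p.
have [sxs fxs] := hxstar.
have [sys gys] := hystar.
have v0 : 0 <= v by apply: (value_ge0 hA01 m0 sxs).
have fv : v <= f by apply: (value_le hA01 m0 sx1).
have f1 : f <= 1 by case/andP: (fmax01 hA01 m0 sx1).
set D0 := Num.max (n%:R / 4 : R) 2.
have D02 : 2 <= D0 by rewrite /D0 le_max lexx orbT.
have hal : al * D0 = f - v by rewrite /al /lrca_alpha divfK // gt_eqF // (lt_le_trans _ D02).
have al0 : 0 <= al by rewrite /al /lrca_alpha divr_ge0 ?subr_ge0 // (le_trans _ D02).
have al2 : al * 2 <= f - v by rewrite -hal; apply: ler_wpM2l.
have mu10 : 0 <= mu1 by apply: hmu0.
have mu20 : 0 <= mu2 by apply: hmu0.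
have mu21 : mu2 <= 1 by apply: le_trans (hmudec _ _ ht'1 hk) ht'.
set be := mu2 * al.
have be0 : 0 <= be by apply: mulr_ge0.
have be1 : be <= al by rewrite /be -[leRHS]mul1r; apply: ler_wpM2r.
set a := fun i => \sum_(j < m) A i j * ystar j.
set b := fun i => A i j0.
set c := fun i => \sum_(j < m) A i j * y k.*2 j.
have hc : forall i, c i = (1 - al) * a i + al * b i.
  move=> i; rewrite /c hy2 /a /b.
  under eq_bigr => j _ do rewrite mulrDr mulrCA [A i j * (al * _)]mulrCA.
  rewrite big_split /= -!mulr_sumr; congr (_ + _ * _).
  by under eq_bigr => j _ do rewrite mulrC; rewrite sum_unitv.
have av : forall i, v <= a i by move=> i; rewrite /v -gys; apply: gmin_le.
have sy2 : @simplex R m (y k.*2).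
  rewrite hy2; case: sys => ys0 ys1; split.
    move=> j; apply: addr_ge0; apply: mulr_ge0 => //; first lra.
    by rewrite /unitv; case: ifP.
  by rewrite big_split /= -!mulr_sumr ys1 sum_unitv1; ring.
have xsa : \sum_(i < n) xstar i * a i <= v.
  by rewrite /a -payoff_rows /v -fxs; apply: fmax_ge.
have xsc : \sum_(i < n) xstar i * c i <= v.
  by rewrite /c -payoff_rows /v -fxs; apply: fmax_ge.
have fb : f <= \sum_(i < n) x t1 i * b i.
  have -> : \sum_(i < n) x t1 i * b i = payoff A (x t1) (unitv j0).
    rewrite payoff_rows; apply: eq_bigr => i _; congr (_ * _).
    by under eq_bigr => j _ do rewrite mulrC; rewrite sum_unitv.
  by apply: fmax_le.
set Z1 := \sum_(i' < n) x t1 i' * expR (- mu1 * a i').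
set Z2 := \sum_(i' < n) x k.*2 i' * expR (- mu2 * c i').
have hx2 : forall i, x k.*2 i = x t1 i * expR (- mu1 * a i) / Z1.
  by move=> i; have := hMWU.2.2 _ t1p i; rewrite ht1 hy1.
have hx3 : forall i, x k.*2.+1 i = x k.*2 i * expR (- mu2 * c i) / Z2.
  by move=> i; have := hMWU.2.2 _ k2p i.
have Z1p : 0 < Z1 by apply: Zpos => // i; apply: expR_gt0.
have Z2p : 0 < Z2 by apply: Zpos => // i; apply: expR_gt0.
set g := fun i => - mu1 * a i + - mu2 * c i.
have hx3' : forall i, x k.*2.+1 i = x t1 i * expR (g i) / (Z1 * Z2).
  move=> i; rewrite hx3 hx2 /g expRD; field.
  by rewrite !gt_eqF.
rewrite (@RE_diff R n xstar (x t1) (x k.*2.+1) g (Z1 * Z2) sxs px1 (mulr_gt0 Z1p Z2p) hx3').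
have hW : Z1 * Z2 = \sum_(i < n) x t1 i * expR (g i).
  rewrite /Z2 mulr_sumr; apply: eq_bigr => i _.
  rewrite hx2 /g expRD; field; by rewrite gt_eqF.
have hg : \sum_(i < n) xstar i * g i =
   - mu1 * (\sum_(i < n) xstar i * a i) + - mu2 * (\sum_(i < n) xstar i * c i).
  rewrite !mulr_sumr -big_split; apply: eq_bigr => i _; rewrite /g /=; ring.
set E := expR (- (mu1 + mu2) * v).
have Ep : 0 < E by apply: expR_gt0.
have hWE : Z1 * Z2 <= E * (1 + be * (v - \sum_(i < n) x t1 i * b i) + be ^+ 2).
  rewrite hW.
  have -> : E * (1 + be * (v - \sum_(i < n) x t1 i * b i) + be ^+ 2) =
      \sum_(i < n) x t1 i * (E * (1 + be * (v - b i) + be ^+ 2)).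
    case: sx1 => _ s1.
    have -> : \sum_(i < n) x t1 i * (E * (1 + be * (v - b i) + be ^+ 2)) =
      E * ((1 + be * v + be ^+ 2) * \sum_(i < n) x t1 i - be * \sum_(i < n) x t1 i * b i).
      rewrite !mulr_sumr -sumrB mulr_sumr; apply: eq_bigr => i _; ring.
    by rewrite s1; ring.
  apply: ler_sum => i _; apply: ler_wpM2l; first exact: ltW.
  have hb := hA01 i j0.
  have hw : expR (be * (v - b i)) <= 1 + be * (v - b i) + be ^+ 2.
    case/andP: hb => hb0 hb1; rewrite /b.
    have d1 : -1 <= v - A i j0 <= 1 by apply/andP; split; lra.
    case/andP: d1 => d1 d2.
    have h1 : 0 <= be * (1 - (v - A i j0)) by apply: mulr_ge0; lra.
    have h2 : 0 <= be * (1 + (v - A i j0)) by apply: mulr_ge0; lra.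
    have hr : -(1/2) <= be * (v - A i j0) <= 1/2 by apply/andP; split; lra.
    apply: le_trans (expR_quad _ _ hr) _.
    have : (be * (v - A i j0)) ^+ 2 <= be ^+ 2.
      rewrite exprMn -[leRHS]mulr1; apply: ler_wpM2l; first by rewrite sqr_ge0.
      have h3 : 0 <= (1 - (v - A i j0)) * (1 + (v - A i j0)) by apply: mulr_ge0; lra.
      rewrite expr2; lra.
    lra.
  have hg' : expR (g i) <= E * expR (be * (v - b i)).
    rewrite /E -expRD ler_expR /g hc /be.
    have h : 0 <= (mu1 + mu2 * (1 - al)) * (a i - v).
      apply: mulr_ge0; last by rewrite subr_ge0.
      apply: addr_ge0 => //; apply: mulr_ge0 => //; lra.
    lra.
  apply: le_trans hg' _; apply: ler_wpM2l => //; exact: ltW.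
rewrite hg.
set W := Z1 * Z2 in hWE *.
set Sb := \sum_(i < n) x t1 i * b i in hWE fb.
have Wp : 0 < W by rewrite /W mulr_gt0.
have hWE' : W / E <= 1 + be * (v - Sb) + be ^+ 2 by rewrite ler_pdivrMr // mulrC.
have lnW : ln W = - (mu1 + mu2) * v + ln (W / E).
  rewrite ln_div ?posrE // /E expRK; ring.
have lnWE := ln_le_sub1 _ _ (divr_gt0 Wp Ep).
rewrite lnW.
have e1 : 1 / 2 * mu2 * al * (f - v) = 1 / 2 * be * (f - v) by rewrite /be; ring.
rewrite e1.
have h1 : 0 <= mu1 * (v - \sum_(i < n) xstar i * a i) by apply: mulr_ge0; lra.
have h2 : 0 <= mu2 * (v - \sum_(i < n) xstar i * c i) by apply: mulr_ge0; lra.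
have h3 : 0 <= be * (Sb - f) by apply: mulr_ge0; lra.
have h4 : 0 <= be * (al - be) by apply: mulr_ge0; lra.
have h5 : 0 <= be * (f - v - al * 2) by apply: mulr_ge0; lra.
rewrite expr2 in hWE'.
lra.
Qed.
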